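(* Let $f=f_0+f_1i+f_2j+f_3k\colon M\to\mathbb H$ be a minimal surface with conjugate $f^*=f_0^*+f_1^*i+f_2^*j+f_3^*k$ and holomorphic null curve $\Phi=f+\mathbf i f^*$. Let $\mu\in\mathbb C\setminus\{0,1\}$, $s=-\ln|\mu|$ and $t\in\mathbb R$ with $e^{s+it}=\frac{\bar\mu-1}{\bar\mu(1-\mu)}$. Then the simple factor dressing with parameter $\mu$ is $$f^\mu=\begin{pmatrix}f_0\\ f_1\\ \cos t\,(f_2\cosh s-f_3^*\sinh s)-\sin t\,(f_3\cosh s+f_2^*\sinh s)\\ \sin t\,(f_2\cosh s-f_3^*\sinh s)+\cos t\,(f_3\cosh s+f_2^*\sinh s)\end{pmatrix}$$ (coordinates w.r.t. $1,i,j,k$), and $f^\mu=\operatorname{Re}(\mathcal L^\mu\Phi)$, i.e. $f^\mu$ is a Goursat transform of $f$ with holomorphic null curve $\mathcal L^\mu\Phi$, where, with $w=s+\mathbf i t$, $$\mathcal L^\mu=\begin{pmatrix}1&0&0&0\\0&1&0&0\\0&0&\cosh w&\mathbf i\sinh w\\0&0&-\mathbf i\sinh w&\cosh w\end{pmatrix}\in O(4,\mathfrak C).$$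
   Context: Quaternions $\mathbb H$ with basis $1,i,j,k$, $\mathbb C=\operatorname{span}_{\mathbb R}\{1,i\}\subset\mathbb H$. $*\omega(X)=\omega(JX)$; conjugate surface $df^*=-*df$. The complexification $\mathfrak C^4=\mathbb R^4\oplus\mathbf i\mathbb R^4$ uses a complex unit $\mathbf i$ distinct from the quaternion $i$; $O(4,\mathfrak C)=\{\mathcal A:\mathcal A^t=\mathcal A^{-1}\}$. Simple factor dressing with parameter $\mu$: with $a=\frac{\mu+\mu^{-1}}2$, $b=i\frac{\mu^{-1}-\mu}2$, $$f^\mu=-f\frac{a-1}2+f^*\frac b2-\frac{b}{a-1}\Big(f\frac b2+f^*\frac{a-1}2\Big).$$ *)

(* Defs.v *)
From Stdlib Require Import Reals.
Open Scope R_scope.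

Record quat := mkH { h0 : R; h1 : R; h2 : R; h3 : R }.

Definition Hadd (p q : quat) : quat :=
  mkH (h0 p + h0 q) (h1 p + h1 q) (h2 p + h2 q) (h3 p + h3 q).
Definition Hopp (p : quat) : quat := mkH (- h0 p) (- h1 p) (- h2 p) (- h3 p).
Definition Hsub (p q : quat) : quat := Hadd p (Hopp q).
Definition Hscal (r : R) (p : quat) : quat :=
  mkH (r * h0 p) (r * h1 p) (r * h2 p) (r * h3 p).
Definition Hmul (p q : quat) : quat :=
  mkH (h0 p * h0 q - h1 p * h1 q - h2 p * h2 q - h3 p * h3 q)
      (h0 p * h1 q + h1 p * h0 q + h2 p * h3 q - h3 p * h2 q)
      (h0 p * h2 q - h1 p * h3 q + h2 p * h0 q + h3 p * h1 q)
      (h0 p * h3 q + h1 p * h2 q - h2 p * h1 q + h3 p * h0 q).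
Definition Hconj (p : quat) : quat := mkH (h0 p) (- h1 p) (- h2 p) (- h3 p).
Definition Hnorm2 (p : quat) : R := h0 p ^ 2 + h1 p ^ 2 + h2 p ^ 2 + h3 p ^ 2.
Definition Hinv (p : quat) : quat := Hscal (/ Hnorm2 p) (Hconj p).

Definition H1 : quat := mkH 1 0 0 0.
Definition Hi : quat := mkH 0 1 0 0.

(** C = span_R{1,i} inside H: the complex number x + y i. *)
Definition Cq (x y : R) : quat := mkH x y 0 0.

Definition dress_a (mu : quat) : quat := Hscal (1/2) (Hadd mu (Hinv mu)).
Definition dress_b (mu : quat) : quat :=
  Hmul Hi (Hscal (1/2) (Hsub (Hinv mu) mu)).

Definition dressing (mu f fs : quat) : quat :=
  let a1 := Hsub (dress_a mu) H1 in
  let b := dress_b mu in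
  Hadd (Hadd (Hopp (Hmul f (Hscal (1/2) a1))) (Hmul fs (Hscal (1/2) b)))
       (Hopp (Hmul (Hmul b (Hinv a1))
                   (Hadd (Hmul f (Hscal (1/2) b)) (Hmul fs (Hscal (1/2) a1))))).

(** Complex scalars of the complexification (unit bold-i, distinct from the
    quaternion i): z = re z + bold-i im z. *)
Record CC := mkC { re : R; im : R }.
Definition Cadd (z w : CC) : CC := mkC (re z + re w) (im z + im w).
Definition Cmul (z w : CC) : CC :=
  mkC (re z * re w - im z * im w) (re z * im w + im z * re w).
Definition Copp (z : CC) : CC := mkC (- re z) (- im z).
Definition Cscal (r : R) (z : CC) : CC := mkC (r * re z) (r * im z).
Definition C0 : CC := mkC 0 0.
Definition C1 : CC := mkC 1 0.
Definition Cbi : CC := mkC 0 1.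
Definition Cexp (z : CC) : CC := mkC (exp (re z) * cos (im z)) (exp (re z) * sin (im z)).
Definition Ccosh (w : CC) : CC := Cscal (1/2) (Cadd (Cexp w) (Cexp (Copp w))).
Definition Csinh (w : CC) : CC := Cscal (1/2) (Cadd (Cexp w) (Copp (Cexp (Copp w)))).

Definition qcoord (p : quat) (n : nat) : R :=
  match n with 0%nat => h0 p | 1%nat => h1 p | 2%nat => h2 p | _ => h3 p end.

Definition C4 := nat -> CC.
Definition mat4 := nat -> nat -> CC.

Definition nullcurve (f fs : quat) : C4 := fun n => mkC (qcoord f n) (qcoord fs n).

Definition matvec (L : mat4) (v : C4) : C4 := fun n =>
  Cadd (Cadd (Cmul (L n 0%nat) (v 0%nat)) (Cmul (L n 1%nat) (v 1%nat)))
       (Cadd (Cmul (L n 2%nat) (v 2%nat)) (Cmul (L n 3%nat) (v 3%nat))).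

Definition ReC4 (v : C4) : quat :=
  mkH (re (v 0%nat)) (re (v 1%nat)) (re (v 2%nat)) (re (v 3%nat)).

Definition inO4C (A : mat4) : Prop :=
  forall m n : nat, (m < 4)%nat -> (n < 4)%nat ->
    Cadd (Cadd (Cmul (A 0%nat m) (A 0%nat n)) (Cmul (A 1%nat m) (A 1%nat n)))
         (Cadd (Cmul (A 2%nat m) (A 2%nat n)) (Cmul (A 3%nat m) (A 3%nat n)))
    = (if Nat.eqb m n then C1 else C0).

Definition Lmu (s t : R) : mat4 := fun m n =>
  let w := mkC s t in
  match m, n with
  | 0%nat, 0%nat => C1
  | 1%nat, 1%nat => C1
  | 2%nat, 2%nat => Ccosh w
  | 2%nat, 3%nat => Cmul Cbi (Csinh w)
  | 3%nat, 2%nat => Copp (Cmul Cbi (Csinh w))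
  | 3%nat, 3%nat => Ccosh w
  | _, _ => C0
  end.

(* Main.v *)
Require Import Defs.
From Stdlib Require Import Reals Lra Psatz.
Open Scope R_scope.

Lemma nz_of (x y : R) : (x, y) <> (0, 0) -> x ^ 2 + y ^ 2 > 0.
Proof.
  intro h. destruct (Req_dec x 0) as [->|hx].
  - destruct (Req_dec y 0) as [->|hy]; [congruence|]. nra.
  - nra.
Qed.


Lemma dress_gen (mu f fs : quat) (x y u v N : R) :
  Hsub (dress_a mu) H1 = Cq x y -> dress_b mu = Cq u v ->
  x ^ 2 + y ^ 2 = N -> N <> 0 ->
  let P0 := - x / 2 - ((u*u - v*v) * x + (2*u*v) * y) / (2 * N) in
  let P1 := - y / 2 - ((2*u*v) * x - (u*u - v*v) * y) / (2 * N) in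
  let U0 := - x / 2 - (u*u+v*v) * x / (2 * N) in
  let U1 := y / 2 + (u*u+v*v) * y / (2 * N) in
  let W0 := (u * x + v * y) in
  let W1 := (v * x - u * y) in
  let V0 := u / 2 - (W0 * x + W1 * y) / (2 * N) in
  let V1 := - v / 2 - (W1 * x - W0 * y) / (2 * N) in
  dressing mu f fs =
  mkH (h0 f * P0 - h1 f * P1) (h0 f * P1 + h1 f * P0)
      (h2 f * U0 - h3 f * U1 + h2 fs * V0 - h3 fs * V1)
      (h2 f * U1 + h3 f * U0 + h2 fs * V1 + h3 fs * V0).
Proof.
  intros ha hb hN hN0. cbv zeta. unfold dressing. cbv zeta. rewrite ha, hb.
  unfold Hinv at 1. 
  replace (Hnorm2 (Cq x y)) with N by (unfold Hnorm2; simpl; rewrite <- hN; ring).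
  destruct f as [a0 a1 a2 a3]; destruct fs as [b0 b1 b2 b3].
  unfold Hsub, Hadd, Hopp, Hscal, Hmul, Hconj, Cq, H1; simpl.
  f_equal; field_simplify; auto; rewrite <- hN; field; rewrite hN; auto.
Qed.

Theorem mainTheorem12 (M : Type) (f fs : M -> quat) (mr mi s t : R)
  (Hmu0 : (mr, mi) <> (0, 0)) (Hmu1 : (mr, mi) <> (1, 0))
  (Hs : s = - ln (sqrt (mr ^ 2 + mi ^ 2)))
  (Ht : Cq (exp s * cos t) (exp s * sin t)
        = Hmul (Hsub (Cq mr (- mi)) H1)
               (Hinv (Hmul (Cq mr (- mi)) (Hsub H1 (Cq mr mi))))) :
  (forall p : M,
     dressing (Cq mr mi) (f p) (fs p)
     = mkH (h0 (f p)) (h1 (f p))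
           (cos t * (h2 (f p) * cosh s - h3 (fs p) * sinh s)
            - sin t * (h3 (f p) * cosh s + h2 (fs p) * sinh s))
           (sin t * (h2 (f p) * cosh s - h3 (fs p) * sinh s)
            + cos t * (h3 (f p) * cosh s + h2 (fs p) * sinh s)))
  /\ (forall p : M,
        dressing (Cq mr mi) (f p) (fs p)
        = ReC4 (matvec (Lmu s t) (nullcurve (f p) (fs p))))
  /\ inO4C (Lmu s t).
Proof.
  set (rr := mr ^ 2 + mi ^ 2).
  assert (Hr : rr > 0) by (apply nz_of; exact Hmu0).
  set (dd := (mr - 1) ^ 2 + mi ^ 2).
  assert (Hd : dd > 0).
  { apply nz_of. intro e. apply Hmu1. injection e; intros; f_equal; lra. }
  assert (HE : exp s > 0) by apply exp_pos.
  assert (HiE : / exp s = sqrt rr).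
  { rewrite Hs, exp_Ropp, Rinv_inv, exp_ln; [reflexivity|]. apply sqrt_lt_R0; exact Hr. }
  assert (HiE2 : (/ exp s) ^ 2 = rr).
  { rewrite HiE. simpl. rewrite Rmult_1_r. apply sqrt_sqrt; lra. }
  assert (Hn : Hnorm2 (Hmul (Cq mr (- mi)) (Hsub H1 (Cq mr mi))) = rr * dd).
  { unfold Hnorm2, rr, dd; simpl. ring. }
  unfold Hinv in Ht. rewrite Hn in Ht.
  assert (HX := f_equal h0 Ht). assert (HY := f_equal h1 Ht).
  simpl in HX, HY. clear Ht.
  assert (P1 : cos t * cosh s = (exp s * cos t) * (1 + (/ exp s) ^ 2) / 2).
  { unfold cosh. rewrite exp_Ropp. field. lra. }
  assert (P2 : sin t * cosh s = (exp s * sin t) * (1 + (/ exp s) ^ 2) / 2).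
  { unfold cosh. rewrite exp_Ropp. field. lra. }
  assert (P3 : cos t * sinh s = (exp s * cos t) * (1 - (/ exp s) ^ 2) / 2).
  { unfold sinh. rewrite exp_Ropp. field. lra. }
  assert (P4 : sin t * sinh s = (exp s * sin t) * (1 - (/ exp s) ^ 2) / 2).
  { unfold sinh. rewrite exp_Ropp. field. lra. }
  rewrite HiE2, HX in P1, P3. rewrite HiE2, HY in P2, P4.
  assert (Hnm : Hnorm2 (Cq mr mi) = rr) by (unfold Hnorm2, rr; simpl; ring).
  assert (Ha : Hsub (dress_a (Cq mr mi)) H1
     = Cq (mr * (1 + / rr) / 2 - 1) (mi * (1 - / rr) / 2)).
  { unfold dress_a, Hinv. rewrite Hnm. unfold Hsub, Hadd, Hopp, Hscal, Hconj, Cq, H1; simpl.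
    f_equal; field; lra. }
  assert (Hb : dress_b (Cq mr mi)
     = Cq (mi * (/ rr + 1) / 2) (mr * (/ rr - 1) / 2)).
  { unfold dress_b, Hinv. rewrite Hnm. unfold Hsub, Hadd, Hopp, Hscal, Hconj, Hmul, Cq, Hi; simpl.
    f_equal; field; lra. }
  assert (HN : (mr * (1 + / rr) / 2 - 1) ^ 2 + (mi * (1 - / rr) / 2) ^ 2 = dd ^ 2 / (4 * rr)).
  { unfold dd, rr. field. fold rr. lra. }
  assert (HN0 : dd ^ 2 / (4 * rr) <> 0).
  { apply Rgt_not_eq. apply Rdiv_lt_0_compat; nra. }
  assert (Part1 : forall p : M,
     dressing (Cq mr mi) (f p) (fs p)
     = mkH (h0 (f p)) (h1 (f p))
           (cos t * (h2 (f p) * cosh s - h3 (fs p) * sinh s)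
            - sin t * (h3 (f p) * cosh s + h2 (fs p) * sinh s))
           (sin t * (h2 (f p) * cosh s - h3 (fs p) * sinh s)
            + cos t * (h3 (f p) * cosh s + h2 (fs p) * sinh s))).
  { intro p. rewrite (dress_gen _ _ _ _ _ _ _ _ Ha Hb HN HN0). cbv zeta.
    destruct (f p) as [a0 a1 a2 a3]. destruct (fs p) as [b0 b1 b2 b3].
    simpl.
    replace (cos t * (a2 * cosh s - b3 * sinh s) - sin t * (a3 * cosh s + b2 * sinh s))
      with (a2 * (cos t * cosh s) - b3 * (cos t * sinh s) - a3 * (sin t * cosh s)
            - b2 * (sin t * sinh s)) by ring.
    replace (sin t * (a2 * cosh s - b3 * sinh s) + cos t * (a3 * cosh s + b2 * sinh s))
      with (a2 * (sin t * cosh s) - b3 * (sin t * sinh s) + a3 * (cos t * cosh s)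
            + b2 * (cos t * sinh s)) by ring.
    rewrite P1, P2, P3, P4.
    assert (rr <> 0) by lra. assert (dd <> 0) by lra.
    unfold rr, dd in *. f_equal; field; tauto. }
  split; [exact Part1|]. split.
  { intro p. rewrite Part1. destruct (f p) as [a0 a1 a2 a3]. destruct (fs p) as [b0 b1 b2 b3].
    unfold ReC4, matvec, Lmu, nullcurve, Ccosh, Csinh, Cexp, Cmul, Cadd, Copp, Cscal, Cbi, C1, C0, qcoord; simpl.
    rewrite cos_neg, sin_neg. unfold cosh, sinh. f_equal; unfold Rdiv; ring_simplify; reflexivity. }
  assert (EE : exp s * exp (- s) = 1) by (rewrite <- exp_plus; replace (s + - s) with 0 by ring; apply exp_0).
  assert (CS : cos t ^ 2 + sin t ^ 2 = 1) by (pose proof (sin2_cos2 t) as h; unfold Rsqr in h; nra).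
  intros m n hm hn.
  destruct m as [|[|[|[|m]]]]; try lia; destruct n as [|[|[|[|n]]]]; try lia;
  unfold Lmu, Ccosh, Csinh, Cexp, Cmul, Cadd, Copp, Cscal, Cbi, C1, C0; simpl;
  unfold Defs.C1, Defs.C0; rewrite ?cos_neg, ?sin_neg; f_equal; try ring; try nra.
Qed.
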